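(* Let $\Pi$ be the node-edge-checkable problem encoding $(\text{edge-degree}+1)$-edge coloring defined below, and $\Pi^*$ its node-list variant. Then for every valid input instance $(S,h_{\mathrm{in}})$ of $\Pi^*$ (on any finite semi-graph $S$), $\Pi^*$ admits a valid solution.
   Context: Semi-graph: a bipartite graph $S=(A\sqcup B,C)$ with every $b\in B$ of degree at most $2$; $A$ = nodes, $B$ = edges, $C$ = half-edges (incident node–edge pairs); degree of a node / rank of an edge = its degree in $S$. Node-edge-checkable problem $\Pi=(\Sigma,\mathcal N_\Pi,\mathcal E_\Pi)$: $\mathcal N_\Pi^i$ ($i\ge 0$) and $\mathcal E_\Pi^i$ ($i\in\{0,1,2\}$) are collections of cardinality-$i$ multisets over $\Sigma$. The problem $\Pi$: $\Sigma=\{(x,y): x,y\in\mathbb Z_{>0}\}\cup\{D\}$. For each $i\ge0$, $\mathcal N_\Pi^i$ consists of all cardinality-$i$ multisets of the form $\{(a_1,b_1),\dots,(a_p,b_p),D,\dots,D\}$ (with $i-p$ copies of $D$, $0\le p\le i$) such that $a_k\le p$ for all $k\le p$ and $b_l\ne b_m$ for all $l\ne m$. $\mathcal E_\Pi^0=\{\emptyset\}$, $\mathcal E_\Pi^1=\{\{D\}\}$, $\mathcal E_\Pi^2=\{\{(a_1,b),(a_2,b)\}: a_1,a_2,b\in\mathbb Z_{>0},\ a_1+a_2\ge b+1\}$. Node-list variant $\Pi^*$: for $i,j\ge0$ and $\psi\in\mathcal N_\Pi^j$, $\mathcal N^i_{\Pi,\psi}$ is the set of cardinality-$i$ multisets $\chi$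 over $\Sigma$ with $\chi\uplus\psi\in\mathcal N_\Pi^{i+j}$, and $\mathcal L^i=\{\mathcal N^i_{\Pi,\psi}:\psi\in\mathcal N_\Pi^j\text{ for some }j\ge0\}$. A valid input instance is $(S,h_{\mathrm{in}})$ with $h_{\mathrm{in}}(v)\in\mathcal L^{\deg(v)}$ for each node $v$. A valid solution is $h_{\mathrm{out}}:H(S)\to\Sigma$ such that for each node $v$ the multiset of labels on its incident half-edges lies in $h_{\mathrm{in}}(v)$, and for each edge $e$ the multiset of labels on its incident half-edges lies in $\mathcal E_\Pi^{\mathrm{rank}(e)}$. *)

(* Defs.v *)
From mathcomp Require Import all_boot.
Set Implicit Arguments. Unset Strict Implicit. Unset Printing Implicit Defensive.

(* Labels: [Some (x,y)] is the pair (x,y); [None] is the symbol D.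
   The alphabet Sigma consists of the labels with x,y > 0 (predicate in_Sigma). *)
Definition Label := option (nat * nat).
Notation D := (@None (nat * nat)).
Definition LP (x y : nat) : Label := Some (x, y).

Definition in_Sigma (l : Label) : bool :=
  match l with Some (x, y) => (0 < x) && (0 < y) | None => true end.

(* Multisets over Sigma are represented by sequences; all predicates below are
   invariant under permutation. *)
Definition pairs_of (m : seq Label) : seq (nat * nat) := pmap id m.

Definition N_Pi (i : nat) (m : seq Label) : Prop :=
  [/\ size m = i, all in_Sigma m,
      all (fun q => q.1 <= size (pairs_of m)) (pairs_of m)
    & uniq (map snd (pairs_of m))].

Definition E_Pi (i : nat) (m : seq Label) : Prop :=
  match i with
  | 0 => m = [::]
  | 1 => m = [:: D]
  | 2 => exists a1 a2 b, [/\ 0 < a1, 0 < a2, 0 < b,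
           perm_eq m [:: LP a1 b; LP a2 b] & b + 1 <= a1 + a2]
  | _ => False
  end.

Definition N_list (i : nat) (psi : seq Label) (chi : seq Label) : Prop :=
  [/\ size chi = i, all in_Sigma chi & N_Pi (i + size psi) (chi ++ psi)].

Definition in_L (i : nat) (L : seq Label -> Prop) : Prop :=
  exists j (psi : seq Label), N_Pi j psi /\ forall chi, L chi <-> N_list i psi chi.

(* Finite semi-graph: nodes A, edges B, half-edges C ⊆ A × B, every edge of degree <= 2. *)
Definition semi_graph (A B : finType) (C : {set A * B}) : Prop :=
  forall b : B, #|[set a : A | (a, b) \in C]| <= 2.

Definition node_deg (A B : finType) (C : {set A * B}) (v : A) : nat :=
  #|[set e : B | (v, e) \in C]|.
Definition edge_rank (A B : finType) (C : {set A * B}) (e : B) : nat :=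
  #|[set v : A | (v, e) \in C]|.

Definition node_labels (A B : finType) (C : {set A * B}) (h : A * B -> Label) (v : A) :=
  [seq h (v, e) | e <- enum B & (v, e) \in C].
Definition edge_labels (A B : finType) (C : {set A * B}) (h : A * B -> Label) (e : B) :=
  [seq h (v, e) | v <- enum A & (v, e) \in C].

Definition valid_input (A B : finType) (C : {set A * B})
    (h_in : A -> seq Label -> Prop) : Prop :=
  forall v : A, in_L (node_deg C v) (h_in v).

(* h_out is a labelling of the half-edges (its values outside C are irrelevant). *)
Definition valid_solution (A B : finType) (C : {set A * B})
    (h_in : A -> seq Label -> Prop) (h_out : A * B -> Label) : Prop :=
  [/\ forall c, c \in C -> in_Sigma (h_out c),
      forall v : A, h_in v (node_labels C h_out v)
    & forall e : B, E_Pi (edge_rank C e) (edge_labels C h_out e)].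

(* Main.v *)
Require Import Defs.
From mathcomp Require Import all_boot zify.
From Stdlib Require Import ClassicalEpsilon.
Set Implicit Arguments. Unset Strict Implicit.

Lemma cnt (T : finType) (P : pred T) : count P (enum T) = #|[set x | P x]|.
Proof. rewrite cardsE cardE -size_filter. congr size. rewrite /enum_mem. rewrite -filter_predI. apply eq_filter => x /=. by rewrite !inE andbT. Qed.

Lemma free_color (F : seq nat) n : size F < n -> exists c, 0 < c < n.+1 /\ c \notin F.
Proof.
move=> Hn; case: (boolP (has (fun c => c \notin F) (iota 1 n))).
  by case/hasP => c; rewrite mem_iota add1n => Hc Hf; exists c.
move/hasPn => H.
have := uniq_leq_size (iota_uniq 1 n) (fun c Hc => negbNE (H c Hc)).
by rewrite size_iota leqNgt Hn.
Qed.

Lemma uenum (T : finType) : uniq (Finite.enum T).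
Proof. by rewrite -enumT enum_uniq. Qed.

Section Color.
Variables (A B : finType) (C : {set A * B}) (forb : A -> seq nat).
Hypothesis SG : semi_graph C.
Definition R2 := [set e | edge_rank C e == 2].
Definition rr v := #|[set e in R2 | (v,e) \in C]|.
Definition pp v := size (forb v) + rr v.
Definition good (E : {set B}) (col : B -> nat) :=
  forall e, e \in E -> [/\ 0 < col e,
    forall v, (v,e) \in C -> col e \notin forb v,
    forall u v, u != v -> (u,e) \in C -> (v,e) \in C -> col e < pp u + pp v &
    forall v e', e' \in E -> e' != e -> (v,e) \in C -> (v,e') \in C -> col e != col e'].

Lemma ends e : e \in R2 -> exists u v, u != v /\ [set w | (w,e) \in C] = [set u; v].
Proof. rewrite inE => /cards2P. done. Qed.

Lemma color_ex n : forall E : {set B}, #|E| = n -> E \subset R2 -> exists col, good E col.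
Proof.
elim: n => [|n IH] E HE Hsub.
  exists (fun _ => 0) => e; move/eqP: HE; rewrite cards_eq0 => /eqP ->; by rewrite inE.
have [e He] : exists e, e \in E by apply/set0Pn; rewrite -card_gt0 HE.
have HE' : #|E :\ e| = n by rewrite (cardsD1 e E) He in HE; case: HE.
have [col' Hg] := IH (E :\ e) HE' (subset_trans (subsetDl _ _) Hsub).
have eR : e \in R2 := subsetP Hsub e He.
have [u [v [uv Huv]]] := @ends e eR.
have eR2 : edge_rank C e == 2 by rewrite inE in eR.
have inc w : ((w,e) \in C) = (w \in [set u; v]) by rewrite -Huv inE.
set Fu := [seq col' x | x <- enum [set x in E :\ e | (u,x) \in C]].
set Fv := [seq col' x | x <- enum [set x in E :\ e | (v,x) \in C]].
set F := forb u ++ forb v ++ Fu ++ Fv.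
have bnd w : (w,e) \in C -> size [seq col' x | x <- enum [set x in E :\ e | (w,x) \in C]] < rr w.
  move=> Hw; rewrite size_map -cardE /rr.
  apply: (@leq_ltn_trans #|[set x in R2 | (w,x) \in C] :\ e|).
apply: subset_leq_card; apply/subsetP => x; rewrite !inE => /andP [/andP [-> xE] ->].
    by have := subsetP Hsub x xE; rewrite inE => ->.
  by rewrite (cardsD1 e [set x in R2 | (w,x) \in C]) !inE eR2 Hw.
have Hu : (u,e) \in C by rewrite inc !inE eqxx.
have Hv : (v,e) \in C by rewrite inc !inE eqxx orbT.
have sF : size F < (pp u + pp v).-1.
  rewrite /F !size_cat /pp; have := bnd u Hu; have := bnd v Hv. rewrite -/Fu -/Fv.
  move=> h1 h2. 
  have : 0 < rr u by apply: leq_ltn_trans h2.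
  lia.
have [c [Hc cF]] := @free_color F _ sF.
have cFu x : x \in E :\ e -> (u,x) \in C -> c != col' x.
  move=> h1 h2; apply/eqP => Ec.
  have hm : col' x \in Fu by apply: map_f; rewrite mem_enum inE h1 h2.
  by move: cF; rewrite Ec /F !mem_cat hm !orbT.
have cFv x : x \in E :\ e -> (v,x) \in C -> c != col' x.
  move=> h1 h2; apply/eqP => Ec.
  have hm : col' x \in Fv by apply: map_f; rewrite mem_enum inE h1 h2.
  by move: cF; rewrite Ec /F !mem_cat hm !orbT.
have cFw w x : (w,e) \in C -> x \in E :\ e -> (w,x) \in C -> c != col' x.
  move=> Hw; have : w \in [set u; v] by rewrite -inc.
  by case/set2P => ->; [apply: cFu | apply: cFv].
exists (fun x => if x == e then c else col' x) => x Hx.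
case: (eqVneq x e) => [->|xe].
  split.
  - by case/andP: Hc.
  - move=> w; rewrite inc !inE => /orP [] /eqP ->; apply: contra cF;
    by rewrite /F !mem_cat => ->; rewrite ?orbT.
  - move=> u' v' uv' hu hv.
    have hc : c < (pp u + pp v) by case/andP: Hc => ? ?; lia.
    by move: hu hv uv'; rewrite !inc => /set2P [] -> /set2P [] ->; rewrite ?eqxx // addnC.
  - move=> w e' He' ne Hw Hw' /=; rewrite (negbTE ne).
    by apply: (cFw w) => //; rewrite !inE ne He'.
have xE : x \in E :\ e by rewrite !inE xe Hx.
have [g1 g2 g3 g4] := Hg x xE.
split => //.
move=> w e' He' ne Hw Hw'.
case: (eqVneq e' e) => [Ee|ne'].
  subst e'. rewrite eq_sym; exact: (cFw w).
apply: (g4 w e') => //; by rewrite !inE ne' He'.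
Qed.
End Color.


Lemma pairs_map (A B : finType) (P : pred B) (R : pred B) (v : A) (a : nat) (col : B -> nat) (s : seq B) :
  pairs_of [seq (fun x : A * B => if x.2 \in R then LP a (col x.2) else D) (v, e) | e <- s & P e]
  = [seq (a, col e) | e <- s & P e && R e].
Proof.
elim: s => //= e s IH; case: (P e) => //=; have -> : (e \in R) = R e by []; case: (R e) => /=; by rewrite IH.
Qed.

Theorem mainTheorem9 (A B : finType) (C : {set A * B})
    (h_in : A -> seq Label -> Prop) :
  semi_graph C -> valid_input C h_in ->
  exists h_out : A * B -> Label, valid_solution C h_in h_out.
Proof.
move=> SG VI.
have H' : forall v, exists psi, N_Pi (size psi) psi /\
    (forall chi, h_in v chi <-> N_list (node_deg C v) psi chi).
  move=> v; have [j [psi [Hp Hl]]] := VI v; exists psi.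
  have Hs : size psi = j by case: Hp.
  by rewrite Hs.
pose psi v := proj1_sig (constructive_indefinite_description _ (H' v)).
have Hpsi v : N_Pi (size (psi v)) (psi v) /\
    (forall chi, h_in v chi <-> N_list (node_deg C v) (psi v) chi)
  := proj2_sig (constructive_indefinite_description _ (H' v)).
pose forb v := map snd (pairs_of (psi v)).
have [col Hcol] := @color_ex A B C forb #|R2 C| (R2 C) erefl (subxx _).
pose p := pp C forb.
pose h := (fun x : A * B => if x.2 \in R2 C then LP (p x.1) (col x.2) else D).
have F0 v e : (v,e) \in C -> e \in R2 C -> 0 < p v /\ 0 < col e.
  move=> Hc He; have [g1 _ _ _] := Hcol e He; split => //.
  rewrite /p /pp /rr; apply: ltn_addl; rewrite card_gt0; apply/set0Pn; exists e.
  by rewrite inE He Hc.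
have S1 : forall c, c \in C -> in_Sigma (h c).
  move=> [v e] Hc; rewrite /h /=; case: ifP => //= eR.
  by have [-> ->] := F0 v e Hc eR.
exists h; split => //.
- move=> v; apply/(proj2 (Hpsi v)).
  have [[_ Pall Pa Pu] _] := Hpsi v.
  have Hsz : size (node_labels C h v) = node_deg C v.
    by rewrite /node_labels size_map size_filter cnt.
  have Hall : all in_Sigma (node_labels C h v).
    apply/allP => l /mapP [e]; rewrite mem_filter => /andP [Hc _] ->; exact: S1.
  split => //.
  have Hpc : pairs_of (node_labels C h v) =
      [seq (p v, col e) | e <- enum B & ((v,e) \in C) && (e \in R2 C)].
    exact: (@pairs_map A B (fun e => (v,e) \in C) (fun e => e \in R2 C) v (p v) col (enum B)).
  have Hps : size (pairs_of (node_labels C h v)) = rr C v.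
    rewrite Hpc size_map size_filter cnt /rr; apply: eq_card => e; by rewrite !inE andbC.
  have Hcat : pairs_of (node_labels C h v ++ psi v) = pairs_of (node_labels C h v) ++ pairs_of (psi v).
    by rewrite /pairs_of pmap_cat.
  have Htot : size (pairs_of (node_labels C h v ++ psi v)) = p v.
    by rewrite Hcat size_cat Hps /p /pp /forb size_map addnC.
  split.
  + by rewrite size_cat Hsz.
  + by rewrite all_cat Hall.
  + rewrite Htot; apply/allP => q; rewrite Hcat mem_cat Hpc; case/orP.
      by case/mapP => e _ ->.
    move=> Hq; have := allP Pa q Hq => /leq_trans; apply.
    by rewrite /p /pp /forb size_map leq_addr.
  rewrite Hcat map_cat cat_uniq Pu andbT Hpc -map_comp.
  apply/andP; split.
    rewrite map_inj_in_uniq ?filter_uniq ?uenum //.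
    move=> e e'; rewrite !mem_filter /= => /andP [/andP [Hc He] _] /andP [/andP [Hc' He'] _] Ec.
    apply/eqP; apply: contraT => ne.
    have [_ _ _ g4] := Hcol e He.
    by move: (g4 v e' He' (ltac:(by rewrite eq_sym)) Hc Hc'); rewrite Ec eqxx.
  apply/hasPn => c Hc; apply/mapP => [[e]]; rewrite mem_filter => /andP [/andP [Hc' He] _] Ec.
  have [_ g2 _ _] := Hcol e He.
  by move: (g2 v Hc'); move: Hc; rewrite Ec /= => ->.
- move=> e.
  have Hs : edge_rank C e = size [seq v <- enum A | (v,e) \in C] by rewrite size_filter cnt.
  have Hu : uniq [seq v <- enum A | (v,e) \in C] by rewrite filter_uniq ?enum_uniq.
  have Hm : forall v, v \in [seq v <- enum A | (v,e) \in C] -> (v,e) \in C.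
    by move=> v; rewrite mem_filter => /andP [].
  have SGe : edge_rank C e <= 2 := SG e.
  have eR : (e \in R2 C) = (edge_rank C e == 2) by rewrite inE.
  have G3 : forall u v, u != v -> (u,e) \in C -> (v,e) \in C -> e \in R2 C -> col e < p u + p v.
    by move=> u v uv Hu' Hv' eR'; have [_ _ g3 _] := Hcol e eR'; apply: g3.
  rewrite /edge_labels; rewrite Hs in SGe eR.
  rewrite Hs.
  move: Hu Hm SGe eR.
  case: [seq v <- enum A | (v,e) \in C] => [|u [|v [|w t]]] //=.
  + by move=> _ _ _ eR; rewrite /h /= eR.
  + move=> Hu Hm _ eR; rewrite /h /= eR.
    have Hu' := Hm u (mem_head _ _).
    have Hv' : (v,e) \in C by apply: Hm; rewrite !inE eqxx orbT.
    have eR' : e \in R2 C by rewrite eR.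
    have [pu c0] := F0 u e Hu' eR'.
    have [pv _] := F0 v e Hv' eR'.
    have uv : u != v by move: Hu; rewrite /= inE andbT.
    exists (p u), (p v), (col e); split => //.
    by rewrite addn1; apply: G3.
Qed.
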